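(* Let $m,n$ be positive integers and let $\{(A_i,\boldsymbol{\gamma}_i)\}_{i=1}^\infty\subset\left([0,1)^{m\times n}\times[0,1)^m\right)\setminus\mathbf{Bad}(m,n)$. Then $\bigcap_{i=1}^\infty\mathcal{C}(A_i,\boldsymbol{\gamma}_i)$ is of second category and dense in the metric space $(\mathcal{C},d)$.
   Context: $[0,1)^{m\times n}$ is the set of real $m\times n$ matrices with entries in $[0,1)$. For $\boldsymbol{x}\in\mathbb{R}^n$, $\|\boldsymbol{x}\|=\max_i|x_i|$; for $\boldsymbol{y}\in\mathbb{R}^m$, $\langle\boldsymbol{y}\rangle=\min_{\boldsymbol{p}\in\mathbb{Z}^m}\|\boldsymbol{y}-\boldsymbol{p}\|$. ''Decreasing'' means non-increasing. $\mathcal{C}$ is the set of decreasing $\psi:\mathbb{N}\to[0,\infty)$ with $\sum_{q\ge1}q^{n-1}\psi(q)^m<\infty$, equipped with the metric $d(\psi_1,\psi_2)=\sum_{q\ge1}q^{n-1}|\psi_1(q)^m-\psi_2(q)^m|$. $\mathcal{C}(A,\boldsymbol{\gamma})=\{\psi\in\mathcal{C}:\langle A\boldsymbol{q}-\boldsymbol{\gamma}\rangle<\psi(\|\boldsymbol{q}\|)\text{ for infinitely many }\boldsymbol{q}\in\mathbb{Z}^n\}$. $\mathbf{Bad}(m,n)=\{(A,\boldsymbol{\gamma}):\liminf_{\boldsymbol{q}\in\mathbb{Z}^n,\|\boldsymbol{q}\|\to\infty}\|\boldsymbol{q}\|^n\langle A\boldsymbol{q}-\boldsymbol{\gamma}\rangle^m>0\}$.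 *)

(* Defs.v *)
From HB Require Import structures.
From mathcomp Require Import all_boot all_order all_algebra.
From mathcomp Require Import all_classical all_reals all_analysis.
Set Implicit Arguments. Unset Strict Implicit. Unset Printing Implicit Defensive.
Import Order.TTheory GRing.Theory Num.Theory numFieldNormedType.Exports.
Local Open Scope classical_set_scope.
Local Open Scope ring_scope.

Section Defs.
Variable R : realType.

Definition supnormZ (n : nat) (q : 'cV[int]_n) : nat :=
  \max_(i < n) `|q i ord0|%N.

Definition supnormR (m : nat) (y : 'cV[R]_m) : R :=
  \big[Num.max/0]_(i < m) `|y i ord0|.

(* <y> = min_{p in Z^m} ||y - p||  (written as the infimum, which is attained) *)
Definition distZ (m : nat) (y : 'cV[R]_m) : R :=
  inf [set r : R | exists p : 'cV[int]_m,
         r = supnormR (y - map_mx (fun z : int => z%:~R) p)].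

Definition Aqg (m n : nat) (A : 'M[R]_(m, n)) (g : 'cV[R]_m) (q : 'cV[int]_n)
  : 'cV[R]_m := A *m map_mx (fun z : int => z%:~R) q - g.

Definition unit_mx (m n : nat) (A : 'M[R]_(m, n)) : Prop :=
  forall i j, 0 <= A i j < 1.

(* Functions psi : N = {1,2,...} -> [0,oo) are represented by
   psi' : nat -> R with psi' k = psi (k+1). *)
Definition psi_at (psi : nat -> R) (q : nat) : R := psi q.-1.

Definition classC (m n : nat) : set (nat -> R) :=
  [set psi : nat -> R | (forall k, 0 <= psi k) /\ (forall k, psi k.+1 <= psi k) /\
     cvgn (series (fun k : nat => (k.+1%:R) ^+ (n.-1) * psi k ^+ m))].

Definition dC (m n : nat) (psi1 psi2 : nat -> R) : R :=
  limn (series (fun k : nat =>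
    (k.+1%:R) ^+ (n.-1) * `|psi1 k ^+ m - psi2 k ^+ m|)).

Definition classCAg (m n : nat) (A : 'M[R]_(m, n)) (g : 'cV[R]_m)
  : set (nat -> R) :=
  [set psi : nat -> R | classC m n psi /\
     ~ finite_set [set q : 'cV[int]_n | q != 0 /\
         distZ (Aqg A g q) < psi_at psi (supnormZ q)]].

(* Bad(m,n):  liminf_{||q|| -> oo} ||q||^n <Aq - gamma>^m > 0 *)
Definition Bad (m n : nat) (A : 'M[R]_(m, n)) (g : 'cV[R]_m) : Prop :=
  exists c : R, 0 < c /\ exists N : nat, forall q : 'cV[int]_n,
    (N <= supnormZ q)%N ->
    c <= (supnormZ q)%:R ^+ n * distZ (Aqg A g q) ^+ m.

Definition closureC (m n : nat) (F : set (nat -> R)) : set (nat -> R) :=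
  [set x | classC m n x /\
     forall e : R, 0 < e -> exists y, F y /\ classC m n y /\ dC m n x y < e].

Definition interiorC (m n : nat) (G : set (nat -> R)) : set (nat -> R) :=
  [set x | classC m n x /\ exists e : R, 0 < e /\
     forall y, classC m n y -> dC m n x y < e -> G y].

Definition nowhere_denseC (m n : nat) (F : set (nat -> R)) : Prop :=
  F `<=` classC m n /\ interiorC m n (closureC m n F) = set0.

Definition meagerC (m n : nat) (S : set (nat -> R)) : Prop :=
  exists F : nat -> set (nat -> R),
    (forall k, nowhere_denseC m n (F k)) /\ S `<=` \bigcup_k F k.

Definition second_categoryC (m n : nat) (S : set (nat -> R)) : Prop :=
  ~ meagerC m n S.

Definition denseC (m n : nat) (S : set (nat -> R)) : Prop :=
  forall psi, classC m n psi -> forall e : R, 0 < e ->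
    exists phi, S phi /\ classC m n phi /\ dC m n psi phi < e.

End Defs.

(* Main.v *)
Require Import Defs.
From HB Require Import structures.
From mathcomp Require Import all_boot all_order all_algebra.
From mathcomp Require Import all_classical all_reals all_analysis.
From mathcomp Require Import ring lra.
Import Order.TTheory GRing.Theory Num.Theory numFieldNormedType.Exports.
Local Open Scope classical_set_scope.
Local Open Scope ring_scope.
Set Implicit Arguments. Unset Strict Implicit.

Section Aux.
Context {R : realType}.

Lemma ser_nd (u : nat -> R) : (forall k, 0 <= u k) -> nondecreasing_seq (series u).
Proof.
move=> u0 a b ab; rewrite /series /=.
by apply: nondecreasing_series => // k _ _; exact: u0.
Qed.

Lemma ser_bound (u : nat -> R) B : (forall k, 0 <= u k) ->
  (forall N, series u N <= B) -> cvgn (series u) /\ limn (series u) <= B.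
Proof.
move=> u0 uB.
have cv : cvgn (series u).
  apply/cvg_ex; exists (sup (range (series u))).
  apply: nondecreasing_cvgn; first exact: ser_nd.
  by exists B => _ [N _ <-].
split => //; apply: limr_le => //; exact: nearW.
Qed.

Lemma ser_le (u : nat -> R) : (forall k, 0 <= u k) -> cvgn (series u) ->
  forall N, series u N <= limn (series u).
Proof. by move=> u0 cv N; apply: nondecreasing_cvgn_le => //; exact: ser_nd. Qed.

Lemma ser_term (u : nat -> R) : (forall k, 0 <= u k) -> cvgn (series u) ->
  forall j, u j <= limn (series u).
Proof.
move=> u0 cv j; have h := @ser_le u u0 cv j.+1; apply: le_trans h.
rewrite /series /= big_nat_recr //= lerDr.
by apply: sumr_ge0 => k _; exact: u0.
Qed.


Section Dist.
Variables (m n : nat).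
Implicit Types a b c : nat -> R.

Definition wt (j : nat) : R := (j.+1%:R) ^+ (n.-1).
Definition tm (a b : nat -> R) (k : nat) : R := wt k * `|a k ^+ m - b k ^+ m|.

Lemma wt_ge1 j : 1 <= wt j.
Proof. by rewrite /wt exprn_ege1 // ler1n. Qed.

Lemma wt_ge0 j : 0 <= wt j.
Proof. exact: (le_trans ler01 (wt_ge1 j)). Qed.

Lemma tm_ge0 a b k : 0 <= tm a b k.
Proof. by rewrite /tm mulr_ge0 ?wt_ge0. Qed.

Lemma dCE a b : dC m n a b = limn (series (tm a b)).
Proof. by []. Qed.

Lemma C_ge0 a : classC m n a -> forall k, 0 <= a k.
Proof. by case. Qed.

Lemma C_dec a : classC m n a -> forall k, a k.+1 <= a k.
Proof. by case=> _ []. Qed.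

Lemma C_cvg a : classC m n a -> cvgn (series (fun k => wt k * a k ^+ m)).
Proof. by case=> _ []. Qed.

Lemma Cterm_ge0 a : classC m n a -> forall k, 0 <= wt k * a k ^+ m.
Proof. by move=> Ca k; rewrite mulr_ge0 ?wt_ge0 // exprn_ge0 // C_ge0. Qed.

Lemma tm_le a b : classC m n a -> classC m n b -> forall k,
  tm a b k <= wt k * a k ^+ m + wt k * b k ^+ m.
Proof.
move=> Ca Cb k; rewrite /tm -mulrDr ler_wpM2l ?wt_ge0 //.
rewrite (le_trans (ler_normB _ _)) // !ger0_norm // exprn_ge0 // ?C_ge0 //.
Qed.

Lemma dC_cvg a b : classC m n a -> classC m n b -> cvgn (series (tm a b)).
Proof.
move=> Ca Cb.
have [] := @ser_bound (tm a b) (limn (series (fun k => wt k * a k ^+ m)) +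
   limn (series (fun k => wt k * b k ^+ m))) (tm_ge0 a b) => // N.
apply: le_trans (_ : series (fun k => wt k * a k ^+ m) N +
   series (fun k => wt k * b k ^+ m) N <= _); last first.
  by apply: lerD; apply: ser_le; try exact: Cterm_ge0; exact: C_cvg.
rewrite /series /= -big_split /=; apply: ler_sum => k _; exact: tm_le.
Qed.

Lemma dC_partial a b N : classC m n a -> classC m n b ->
  series (tm a b) N <= dC m n a b.
Proof. by move=> Ca Cb; apply: ser_le; [exact: tm_ge0| exact: dC_cvg]. Qed.

Lemma dC_pt a b j : classC m n a -> classC m n b ->
  `|a j ^+ m - b j ^+ m| <= dC m n a b.
Proof.
move=> Ca Cb; have h := @ser_term (tm a b) (tm_ge0 a b) (dC_cvg Ca Cb) j; apply: le_trans h.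
by rewrite /tm ler_peMl // wt_ge1.
Qed.

Lemma dC_ge0 a b : classC m n a -> classC m n b -> 0 <= dC m n a b.
Proof. by move=> Ca Cb; have h := dC_pt 0 Ca Cb; apply: le_trans h. Qed.

Lemma dC_le a b B : (forall N, series (tm a b) N <= B) -> dC m n a b <= B.
Proof. by move=> h; have [] := @ser_bound (tm a b) B (tm_ge0 a b) h. Qed.

Lemma dC_sym a b : dC m n a b = dC m n b a.
Proof.
rewrite !dCE; congr (limn (series _)); apply/funext => k.
by rewrite /tm distrC.
Qed.

Lemma dC_refl a : classC m n a -> dC m n a a = 0.
Proof.
move=> Ca; apply/eqP; rewrite eq_le dC_ge0 // andbT; apply: dC_le => N.
by rewrite /series /= big1 // => k _; rewrite /tm subrr normr0 mulr0.
Qed.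

Lemma dC_tri a b c : classC m n a -> classC m n b -> classC m n c ->
  dC m n a c <= dC m n a b + dC m n b c.
Proof.
move=> Ca Cb Cc; apply: dC_le => N.
have h := lerD (dC_partial N Ca Cb) (dC_partial N Cb Cc); apply: le_trans h.
rewrite /series /= -big_split /=; apply: ler_sum => k _.
rewrite /tm -mulrDr ler_wpM2l ?wt_ge0 //.
by rewrite (le_trans _ (ler_normD _ _)) // addrA subrK.
Qed.


Lemma pow_sup (c b : R) k : 0 <= c -> 0 <= b -> c ^+ k.+1 + b ^+ k.+1 <= (c + b) ^+ k.+1.
Proof.
move=> c0 b0; elim: k => [|k IH]; first by rewrite !expr1.
rewrite exprS [in X in _ <= X]exprS.
have h1 : 0 <= c ^+ k.+1 by rewrite exprn_ge0.
have h2 : 0 <= b ^+ k.+1 by rewrite exprn_ge0.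
rewrite (exprS b).
have : (c + b) * (c ^+ k.+1 + b ^+ k.+1) <= (c + b) * (c + b) ^+ k.+1.
  by rewrite ler_wpM2l // addr_ge0.
apply: le_trans; rewrite mulrDl !mulrDr.
have h3 : 0 <= c * b ^+ k.+1 by rewrite mulr_ge0.
have h4 : 0 <= b * c ^+ k.+1 by rewrite mulr_ge0.
lra.
Qed.

Hypothesis hm : (0 < m)%N.

Lemma pow_diff (a b : R) : 0 <= a -> 0 <= b -> `|a - b| ^+ m <= `|a ^+ m - b ^+ m|.
Proof.
wlog ba : a b / b <= a.
  move=> W a0 b0; case: (leP b a) => h; first exact: W.
  by rewrite distrC [X in _ <= X]distrC; apply: W => //; exact: ltW.
move=> a0 b0; rewrite !ger0_norm ?subr_ge0 //; last by rewrite lerXn2r.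
case: m hm => // k _.
have := @pow_sup (a - b) b k; rewrite subrK; rewrite subr_ge0 => /(_ ba b0).
lra.
Qed.


Lemma cvg_ser (f : nat -> nat -> R) (g : nat -> R) N :
  (forall i, (fun l => f l i) @ \oo --> g i) ->
  (fun l => series (f l) N) @ \oo --> series g N.
Proof.
move=> hf; elim: N => [|N IH].
  have -> : (fun l => series (f l) 0) = fun=> 0.
    by apply/funext => l; rewrite /series /= big_geq.
  by rewrite /series /= big_geq //; exact: cvg_cst.
have -> : (fun l => series (f l) N.+1) = (fun l => series (f l) N + f l N).
  by apply/funext => l; rewrite /series /= big_nat_recr.
rewrite [X in _ --> X]/series /= big_nat_recr //=.
exact: cvgD.
Qed.

Lemma complete_C (x : nat -> nat -> R) (r : nat -> R) :
  (forall k, classC m n (x k)) ->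
  (forall k, r k.+1 <= k.+1%:R^-1) ->
  (forall k l, (k <= l)%N -> dC m n (x k) (x l) <= r k) ->
  exists X, classC m n X /\ forall k, dC m n (x k) X <= r k.
Proof.
move=> Cx rk dx.
have cvj : forall j, cvgn (fun k => x k j).
  move=> j; apply: cauchy_cvg; apply: cauchy_exP => e e0.
  pose K := Num.Def.trunc ((e ^+ m)^-1).
  exists (x K.+1 j); rewrite /fmapE -ball_normE /ball_.
  exists K.+1 => // k /= Kk.
  have em : 0 < e ^+ m by rewrite exprn_gt0.
  have Kl : K.+1%:R^-1 < e ^+ m.
    rewrite -[X in _ < X]invrK ltf_pV2 ?posrE ?invr_gt0 //; exact: truncnS_gt.
  have h1 := pow_diff (C_ge0 (Cx K.+1) j) (C_ge0 (Cx k) j).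
  have h2 := dC_pt j (Cx K.+1) (Cx k).
  have h3 := dx _ _ Kk.
  have h4 := rk K.
  have : `|x K.+1 j - x k j| ^+ m < e ^+ m.
    exact: (le_lt_trans (le_trans h1 (le_trans h2 (le_trans h3 h4))) Kl).
  by rewrite (ltr_pXn2r hm) // nnegrE // ltW.
pose X j := limn (fun k => x k j).
have Xcv j : (fun k => x k j) @ \oo --> X j by exact: cvj.
have X0 j : 0 <= X j.
  by apply: limr_ge (cvj j) _; apply: nearW => k; exact: C_ge0 (Cx k) j.
have Xd j : X j.+1 <= X j.
  by apply: ler_lim (cvj j.+1) (cvj j) _; apply: nearW => k; exact: C_dec.
have Xm j : (fun k => x k j ^+ m) @ \oo --> X j ^+ m.
  have := continuous_cvg _ (@exprn_continuous R m (X j)) (Xcv j).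
  by apply; exact: nbhs_filter. 
have Tcv k i : (fun l => tm (x k) (x l) i) @ \oo --> tm (x k) X i.
  apply: cvgM; first exact: cvg_cst.
  apply: cvg_norm; apply: cvgB; first exact: cvg_cst.
  exact: Xm.
have Pb k N : series (tm (x k) X) N <= r k.
  have Hn : \forall l \near \oo, series (tm (x k) (x l)) N <= r k.
    apply: filterS (nbhs_infty_ge k) => l kl.
    have h := dx _ _ kl; apply: le_trans h.
    exact: dC_partial.
  exact: (cvgr_to_le (cvg_ser (N:=N) (Tcv k)) Hn).
have CX : classC m n X.
  split => //; split => //.
  have [] := @ser_bound (fun k => wt k * X k ^+ m)
    (limn (series (fun k => wt k * x 0%N k ^+ m)) + r 0%N) _ _ => //.
    by move=> k; rewrite mulr_ge0 ?wt_ge0 // exprn_ge0.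
  move=> N.
  have := Pb 0%N N.
  have := ser_le (Cterm_ge0 (Cx 0%N)) (C_cvg (Cx 0%N)) N.
  suff : series (fun k => wt k * X k ^+ m) N <=
    series (fun k => wt k * x 0%N k ^+ m) N + series (tm (x 0%N) X) N by lra.
  rewrite /series /= -big_split /=; apply: ler_sum => k _.
  rewrite /tm -mulrDr ler_wpM2l ?wt_ge0 //.
  rewrite -lerBlDl distrC.
  exact: ler_norm.
exists X; split => // k.
exact: dC_le (Pb k).
Qed.


Definition good (G : set (nat -> R)) := forall x, classC m n x -> forall r, 0 < r ->
  exists x', classC m n x' /\ exists rho, 0 < rho /\ rho <= r /\
    forall z, classC m n z -> dC m n x' z <= rho -> dC m n x z < r /\ G z.

Lemma good_sub (G1 G2 : set (nat -> R)) : good G1 -> (forall z, classC m n z -> G1 z -> G2 z) -> good G2.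
Proof.
move=> g h x Cx r r0; have [x' [Cx' [rho [rho0 [rr H]]]]] := g x Cx r r0.
exists x'; split => //; exists rho; do 2 split => //.
by move=> z Cz dz; have [] := H z Cz dz; split => //; exact: h.
Qed.

Lemma good_and (G1 G2 : set (nat -> R)) : good G1 -> good G2 -> good (G1 `&` G2).
Proof.
move=> g1 g2 x Cx r r0; have [x1 [Cx1 [r1 [r10 [rr1 H1]]]]] := g1 x Cx r r0.
have [x2 [Cx2 [r2 [r20 [rr2 H2]]]]] := g2 x1 Cx1 r1 r10.
exists x2; split => //; exists r2; split => //; split; first exact: le_trans rr1.
move=> z Cz dz; have [d1 G2z] := H2 z Cz dz.
have [d G1z] := H1 z Cz (ltW d1).
by split.
Qed.

Lemma good_big (G : nat -> set (nat -> R)) k : (forall i, good (G i)) ->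
  good (fun z => forall i, (i <= k)%N -> G i z).
Proof.
move=> g; elim: k => [|k IH].
  eapply good_sub; first exact: (g 0%N). move=> z _ Gz i; rewrite leqn0 => /eqP -> //.
eapply good_sub; first exact: (good_and IH (g k.+1)). move=> z _ [H1 H2] i.
by rewrite leq_eqVlt => /orP[/eqP -> //|]; rewrite ltnS; exact: H1.
Qed.

Lemma baire (G : nat -> set (nat -> R)) : (forall k, good (G k)) ->
  forall psi, classC m n psi -> forall e, 0 < e ->
  exists X, classC m n X /\ dC m n psi X < e /\ forall k, G k X.
Proof.
move=> g psi Cpsi e e0.
have step : forall kp : nat * ((nat -> R) * R), exists p' : (nat -> R) * R,
   (classC m n kp.2.1 /\ 0 < kp.2.2) -> classC m n p'.1 /\ 0 < p'.2 /\
   p'.2 <= kp.1.+1%:R^-1 /\ forall z, classC m n z -> dC m n p'.1 z <= p'.2 ->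
     dC m n kp.2.1 z < kp.2.2 /\ G kp.1 z.
  move=> [k [x r]] /=.
  have [[Cx r0]|nh] := pselect (classC m n x /\ 0 < r); last first.
    by exists (x, r) => h; exfalso; exact: nh.
  have r'0 : 0 < Num.min r (k.+1%:R^-1) by rewrite lt_min r0 invr_gt0 ltr0n.
  have [x' [Cx' [rho [rho0 [rr H]]]]] := g k x Cx _ r'0.
  exists (x', rho) => _ /=; split => //; split => //; split.
    by apply: le_trans rr _; rewrite ge_min lexx orbT.
  move=> z Cz dz; have [d Gz] := H z Cz dz; split => //.
  by apply: lt_le_trans d _; rewrite ge_min lexx.
have [f Hf] := choice step.
pose fix s k := if k is k'.+1 then f (k', s k') else (psi, e).
pose x k := (s k).1; pose r k := (s k).2.
have inv : forall k, classC m n (x k) /\ 0 < r k.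
  elim => [|k [IH1 IH2]]; first by split.
  by have [C1 [p1 _]] := Hf (k, s k) (conj IH1 IH2); split.
have stp : forall k z, classC m n z -> dC m n (x k.+1) z <= r k.+1 ->
    dC m n (x k) z < r k /\ G k z.
  move=> k; have [] := Hf (k, s k) (inv k) => _ [_ [_ H]].
  exact: H.
have rk : forall k, r k.+1 <= k.+1%:R^-1.
  by move=> k; have [] := Hf (k, s k) (inv k) => _ [_ [H _]].
have nest : forall k l, (k <= l)%N -> forall z, classC m n z ->
    dC m n (x l) z <= r l -> dC m n (x k) z <= r k.
  move=> k; elim => [|l IH].
    by rewrite leqn0 => /eqP ->.
  rewrite leq_eqVlt => /orP[/eqP -> //|]; rewrite ltnS => kl z Cz dz.
  have [d _] := stp l z Cz dz.
  exact: IH kl z Cz (ltW d).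
have dx : forall k l, (k <= l)%N -> dC m n (x k) (x l) <= r k.
  move=> k l kl; apply: nest kl _ (inv l).1 _.
  rewrite dC_refl; [exact: (ltW (inv l).2) | exact: (inv l).1].
have [X [CX dX]] := complete_C (fun k => (inv k).1) rk dx.
exists X; split => //; split.
  by have [] := stp 0%N X CX (dX 1%N).
by move=> k; have [] := stp k X CX (dX k.+1).
Qed.


Lemma good_nd (F : set (nat -> R)) : nowhere_denseC m n F -> good (fun z => ~ F z).
Proof.
move=> [FC Hint] x Cx r r0.
have nI : ~ Defs.interiorC m n (Defs.closureC m n F) x by rewrite Hint.
have [y [Cy [dy ncl]]] : exists y, classC m n y /\ dC m n x y < r /\
    ~ Defs.closureC m n F y.
  apply: contrapT => H0; apply: nI; split => //; exists r; split => // y Cy dy.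
  apply: contrapT => ncl; apply: H0; exists y; split => //.
have [e' [e'0 He']] : exists e', 0 < e' /\ forall z, F z -> ~ dC m n y z < e'.
  apply: contrapT => H0; apply: ncl; split => // e e0.
  apply: contrapT => H1; apply: H0; exists e; split => // z Fz dz.
  by apply: H1; exists z; split => //; split => //; exact: FC.
have dxy0 := dC_ge0 Cx Cy.
exists y; split => //; exists (Num.min (e' / 2) ((r - dC m n x y) / 2)).
split; first by rewrite lt_min; apply/andP; split; lra.
split; first by rewrite ge_min; apply/orP; right; lra.
move=> z Cz; rewrite le_min => /andP[dz1 dz2]; split.
  have := dC_tri Cx Cy Cz; lra.
move=> Fz; apply: (He' z Fz); lra.
Qed.


Lemma sum_if (c : R) K N :
  \sum_(0 <= k < N) (if (k < K)%N then c else 0) = (minn N K)%:R * c.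
Proof.
elim: N => [|N IH]; first by rewrite big_geq // min0n mul0r.
rewrite big_nat_recr //= IH.
case: (ltnP N K) => h.
  by rewrite (minn_idPl h) -natr1 mulrDl mul1r.
by rewrite (minn_idPr (leqW h)) addr0.
Qed.

Hypothesis hn : (0 < n)%N.

Definition U (A : 'M[R]_(m, n)) (gg : 'cV[R]_m) (N : nat) : set (nat -> R) :=
  fun z => exists q : 'cV[int]_n, (N <= supnormZ q)%N /\ q != 0 /\
    distZ (Aqg A gg q) < psi_at z (supnormZ q).

Lemma supnormZ0 (q : 'cV[int]_n) : (0 < supnormZ q)%N -> q != 0.
Proof.
move=> h; apply/eqP => q0; move: h; rewrite q0 /supnormZ big1 // => i _.
by rewrite mxE.
Qed.

Lemma good_U A gg N : ~ Bad A gg -> good (U A gg N).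
Proof.
move=> nB x Cx r r0.
pose c := r / 2 ^+ m.+1.
have c0 : 0 < c by rewrite divr_gt0 // exprn_gt0.
have [q [Kq qc]] : exists q : 'cV[int]_n, (N.+1 <= supnormZ q)%N /\
    (supnormZ q)%:R ^+ n * distZ (Aqg A gg q) ^+ m < c.
  apply: contrapT => H0; apply: nB; exists c; split => //; exists N.+1 => q Kq.
  rewrite leNgt; apply/negP => lt; apply: H0; exists q; split => //.
set K := supnormZ q in Kq qc *.
set D := distZ (Aqg A gg q) in qc *.
have K1 : (0 < K)%N by apply: leq_trans Kq.
have Kn0 : 0 < K%:R ^+ n :> R by rewrite exprn_gt0 // ltr0n.
pose tau : R := Num.min 1 (r / (2 * K%:R ^+ n)).
have tau0 : 0 < tau by rewrite lt_min ltr01 /= divr_gt0 // mulr_gt0.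
have tau1 : tau <= 1 by rewrite ge_min lexx.
have tauK : K%:R ^+ n * tau <= r / 2.
  have : tau <= r / (2 * K%:R ^+ n) by rewrite ge_min lexx orbT.
  rewrite -(ler_pM2l Kn0) => /le_trans; apply.
  have KK : K%:R ^+ n != 0 :> R by rewrite gt_eqF.
  by rewrite le_eqVlt; apply/orP; left; apply/eqP; field.
pose t := Num.max (2 * D) tau.
have t0 : 0 < t by rewrite lt_max tau0 orbT.
have Dt : D < t.
  rewrite lt_max; case: (ltP 0 D) => D0; first by apply/orP; left; lra.
  by apply/orP; right; exact: le_lt_trans D0 tau0.
have Ktm : K%:R ^+ n * t ^+ m <= r / 2.
  rewrite /t; case: (leP (2 * D) tau) => h.
    apply: le_trans tauK; rewrite ler_pM2l //.
    rewrite -(prednK hm) exprS ler_piMr ?exprn_ile1 // ltW //.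
  rewrite exprMn mulrCA.
  have D0 : 0 <= D by have := ltW (lt_trans tau0 h); lra.
  have : 2 ^+ m * (K%:R ^+ n * D ^+ m) <= 2 ^+ m * c.
    by rewrite ler_pM2l ?exprn_gt0 // ltW.
  move/le_trans; apply.
  have m2 : 2 ^+ m != 0 :> R by rewrite gt_eqF // exprn_gt0.
  by rewrite /c exprS le_eqVlt; apply/orP; left; apply/eqP; field.
pose phi j := if (j < K)%N then Num.max (x j) t else x j.
have x0 := C_ge0 Cx.
have phi0 j : 0 <= phi j.
  by rewrite /phi; case: ifP => _ //; rewrite le_max x0.
have tmb j : tm x phi j <= if (j < K)%N then K%:R ^+ n.-1 * t ^+ m else 0.
  rewrite /tm /phi; case: ifP => jK; last by rewrite subrr normr0 mulr0.
  apply: ler_pM; [exact: wt_ge0| exact: normr_ge0| |].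
    by rewrite /wt lerXn2r ?nnegrE ?ler_nat // ler0n.
  case: (leP t (x j)) => h.
    by rewrite subrr normr0 exprn_ge0 // ltW.
  rewrite distrC ger0_norm.
    by rewrite lerBlDr lerDl exprn_ge0.
  by rewrite subr_ge0 lerXn2r ?nnegrE // ?ltW.
have sb N' : series (tm x phi) N' <= K%:R ^+ n * t ^+ m.
  apply: le_trans (_ : \sum_(0 <= k < N') (if (k < K)%N then
     K%:R ^+ n.-1 * t ^+ m else 0) <= _).
    by apply: ler_sum => k _; exact: tmb.
  rewrite sum_if; apply: le_trans (_ : K%:R * (K%:R ^+ n.-1 * t ^+ m) <= _).
    by rewrite ler_wpM2r ?ler_nat ?geq_minr // mulr_ge0 ?exprn_ge0 ?ler0n // ltW.
  by rewrite mulrA -exprS prednK.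
have Cphi : classC m n phi.
  split => //; split.
    move=> j; rewrite /phi.
    case: (ltnP j.+1 K) => h1.
      rewrite (ltnW h1) ge_max; apply/andP; split; rewrite le_max; apply/orP; [left; exact: C_dec Cx j| right; exact: lexx].

    case: (ltnP j K) => h2.
      by rewrite le_max (C_dec Cx j).
    exact: (C_dec Cx j).
  have [] := @ser_bound (fun k => wt k * phi k ^+ m)
    (limn (series (fun k => wt k * x k ^+ m)) + K%:R ^+ n * t ^+ m) _ _ => //.
    by move=> k; rewrite mulr_ge0 ?wt_ge0 // exprn_ge0.
  move=> N'.
  have := sb N'.
  have := ser_le (Cterm_ge0 Cx) (C_cvg Cx) N'.
  suff : series (fun k => wt k * phi k ^+ m) N' <=
    series (fun k => wt k * x k ^+ m) N' + series (tm x phi) N' by lra.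
  rewrite /series /= -big_split /=; apply: ler_sum => k _.
  rewrite /tm -mulrDr ler_wpM2l ?wt_ge0 //.
  rewrite -lerBlDl distrC. exact: ler_norm.
have dxphi : dC m n x phi <= r / 2 by apply: dC_le => N'; apply: le_trans (sb N') Ktm.
pose M := Num.max D 0.
have M0 : 0 <= M by rewrite le_max lexx orbT.
have Mt : M < t by rewrite gt_max Dt t0.
pose gap := t ^+ m - M ^+ m.
have gap0 : 0 < gap by rewrite subr_gt0 ltrXn2r // -lt0n.
exists phi; split => //; exists (Num.min (gap / 2) (r / 4)).
split; first by rewrite lt_min; apply/andP; split; lra.
split; first by rewrite ge_min; apply/orP; right; lra.
move=> z Cz; rewrite le_min => /andP[dz1 dz2]; split.
  have := dC_tri Cx Cphi Cz; lra.
exists q; split; first exact: ltnW.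
split; first exact: supnormZ0.
rewrite /psi_at -/K.
have pz := dC_pt K.-1 Cphi Cz.
have phiK : t ^+ m <= phi K.-1 ^+ m.
  have h1 : t <= phi K.-1.
    rewrite /phi prednK // leqnn le_max; apply/orP; right; exact: lexx.
  apply: lerXn2r => //; rewrite nnegrE; [exact: ltW | exact: phi0].
have zK : M ^+ m < z K.-1 ^+ m.
  have := ler_norm (phi K.-1 ^+ m - z K.-1 ^+ m).
  rewrite /gap in gap0 dz1. move: pz phiK gap0 dz1. set a1 := t ^+ m. set a2 := M ^+ m. set a3 := phi K.-1 ^+ m. set a4 := z K.-1 ^+ m. lra.
have : M < z K.-1.
  rewrite ltNge; apply/negP => h; move: zK; rewrite ltNge.
  by rewrite lerXn2r ?nnegrE // C_ge0.
by apply: le_lt_trans; rewrite le_max lexx.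
Qed.


Lemma U_mono A gg N k z : (N <= k)%N -> U A gg k z -> U A gg N z.
Proof.
by move=> Nk [q [kq [q0 Dq]]]; exists q; split => //; apply: leq_trans kq.
Qed.

Lemma U_inf A gg z : classC m n z -> (forall N, U A gg N z) -> classCAg A gg z.
Proof.
move=> Cz HU; split => // /finite_fsetP [B HB].
pose Bm := \max_(q <- finmap.enum_fset B) supnormZ q.
have [q [Kq [q0 Dq]]] := HU Bm.+1.
have qB : q \in finmap.enum_fset B.
  have h := congr1 (fun P => P q) HB; simpl in h.
  by move: (conj q0 Dq); rewrite h.
have := @leq_bigmax_seq _ (finmap.enum_fset B) xpredT (@supnormZ n) q qB isT.
by rewrite -/Bm => h; move: (leq_trans Kq h); rewrite ltnn.
Qed.

Lemma C0 : classC m n (fun=> (0 : R)).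
Proof.
split => //; split => //.
have [] := @ser_bound (fun k => wt k * (fun=> 0 : R) k ^+ m) 0.
- by move=> k; rewrite expr0n -(prednK hm) /= mulr0.
- by move=> N; rewrite /series /= big1 // => k _; rewrite expr0n -(prednK hm) /= mulr0.
- by [].
Qed.

End Dist.
End Aux.


Unset Implicit Arguments. Set Strict Implicit.
Theorem corollary1p4 (R : realType) (m n : nat) (hm : (0 < m)%N) (hn : (0 < n)%N)
  (A : nat -> 'M[R]_(m, n)) (g : nat -> 'cV[R]_m)
  (hA : forall i, unit_mx (A i))
  (hg : forall i k, 0 <= g i k ord0 < 1)
  (hbad : forall i, ~ Bad (A i) (g i)) :
  let S := [set psi | forall i, classCAg (A i) (g i) psi] in
  second_categoryC m n S /\ denseC m n S.
Proof.
move=> S.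
pose Uf k := fun z : nat -> R => forall i, (i <= k)%N -> U (A i) (g i) k z.
have gU k : good m n (Uf k).
  exact: (good_big (G := fun i => U (A i) (g i) k) k
    (fun i => good_U hm hn k (hbad i))).
have US z : classC m n z -> (forall k, Uf k z) -> S z.
  move=> Cz H i; apply: U_inf => // N.
  apply: (@U_mono _ _ _ _ _ N (maxn i N)); first exact: leq_maxr.
  by apply: H; exact: leq_maxl.
split.
  move=> [F [ndF cov]].
  have gG k : good m n ((fun z => ~ F k z) `&` Uf k).
    by apply: good_and; [exact: good_nd | exact: gU].
  have [X [CX [_ GX]]] := baire hm gG (C0 n hm) ltr01.
  have SX : S X by apply: US => // k; have [] := GX k.
  have [k _ FkX] := cov X SX.
  by have [] := GX k.
move=> psi Cpsi e e0.
have [X [CX [dX GX]]] := baire hm gU Cpsi e0.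
by exists X; split => //; apply: US.
Qed.
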